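(* Let $\Sigma=\{a,b,c\}$ and let $L_\infty\subseteq\mathcal{T}_\Sigma$ be the set of $\Sigma$-trees $t$ such that on every infinite branch of $t$ the letter $a$ occurs infinitely often. Then $L_\infty$ is comeager in $\mathcal{T}_\Sigma$.
   Context: The full binary tree is $V=\{L,R\}^*$; a $\Sigma$-tree is a map $t:V\to\Sigma$ and $\mathcal{T}_\Sigma=\Sigma^V$ with the product topology ($\Sigma$ discrete). An infinite branch is an infinite sequence of vertices $\epsilon, d_1, d_1d_2,\dots$ with $d_j\in\{L,R\}$. A set is comeager if its complement is a countable union of nowhere dense sets. *)

(* Defs.v *)
From HB Require Import structures.
From mathcomp Require Import all_boot all_order.
From mathcomp Require Import all_classical all_reals all_analysis.
Set Implicit Arguments. Unset Strict Implicit. Unset Printing Implicit Defensive.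
Local Open Scope classical_set_scope.

Inductive dir := L | R.
(* Vertices: finite words over {L,R}; the root is [::] (epsilon). *)
Definition vertex := seq dir.

Inductive Sigma := a | b | c.
Definition Sigma_to_ord (x : Sigma) : 'I_3 :=
  match x with a => @Ordinal 3 0 isT | b => @Ordinal 3 1 isT | c => @Ordinal 3 2 isT end.
Definition ord_to_Sigma (i : 'I_3) : Sigma :=
  match val i with 0 => a | 1 => b | _ => c end.
Lemma Sigma_ordK : cancel Sigma_to_ord ord_to_Sigma.
Proof. by case. Qed.
HB.instance Definition _ := Finite.copy Sigma (can_type Sigma_ordK).
HB.instance Definition _ := isPointed.Build Sigma a.

Definition Tree := {ptws vertex -> discrete_topology Sigma}.

Definition nowhere_dense (T : topologicalType) (A : set T) : Prop :=
  (closure A)^° = set0.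

Definition comeager (T : topologicalType) (A : set T) : Prop :=
  exists N : nat -> set T,
    (forall n, nowhere_dense (N n)) /\ ~` A = \bigcup_n N n.

(* An infinite branch eps, d_1, d_1 d_2, ... is given by the direction
   sequence d : nat -> dir; its n-th vertex is d_1 ... d_n. *)
Definition branch_vertex (d : nat -> dir) (n : nat) : vertex := mkseq d n.

Definition L_infty : set Tree :=
  [set t : Tree | forall d : nat -> dir,
      forall m : nat, exists n : nat, (m <= n)%N /\ t (branch_vertex d n) = a].

(* Main.v *)
Require Import Defs.
From mathcomp Require Import all_boot all_classical all_reals all_analysis.
From Stdlib Require List.
Set Implicit Arguments. Unset Strict Implicit. Unset Printing Implicit Defensive.
Local Open Scope classical_set_scope.

Fixpoint words (k : nat) : seq vertex :=
  match k with
  | 0 => [:: [::]]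
  | k.+1 => [seq rcons w L | w <- words k] ++ [seq rcons w R | w <- words k]
  end.

Lemma words_branch d k : List.In (branch_vertex d k) (words k).
Proof.
rewrite /branch_vertex; elim: k => [|k IH] /=; first by left.
rewrite mkseqS; apply: List.in_or_app; case: (d k).
  by left; apply: (List.in_map (fun w => rcons w L)).
by right; apply: (List.in_map (fun w => rcons w R)).
Qed.

Lemma words_size k w : List.In w (words k) -> size w = k.
Proof.
elim: k w => [|k IH] w /=; first by case=> // <-.
move=> H; case: (List.in_app_or _ _ _ H) => H1;
  have [u [<- Hu]] := (proj1 (List.in_map_iff _ _ _) H1);
  by rewrite size_rcons (IH _ Hu).
Qed.

Lemma open_eqa (v : vertex) : open [set s : Tree | s v = a].
Proof.
rewrite openE => s /= sv.
have : nbhs s --> s by [].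
move/(cvg_sup _ _ (nbhs_filter s)) => /(_ v); apply.
rewrite nbhsE; exists [set s : Tree | s v = a].
split.
- exists [set a]; first exact: discrete_open.
  by [].
- exact: sv.
- by move=> t /= ->.
Qed.

Lemma open_W (l : seq vertex) :
  open [set s : Tree | forall v, List.In v l -> s v = a].
Proof.
elim: l => [|v l IH].
  have -> : [set s : Tree | forall v, List.In v [::] -> s v = a] = setT.
    by apply/seteqP; split => s //= _ v [].
  exact: openT.
have -> : [set s : Tree | forall w, List.In w (v :: l) -> s w = a] =
  [set s : Tree | s v = a] `&` [set s : Tree | forall v, List.In v l -> s v = a].
  apply/seteqP; split => s /=.
    by move=> H; split; [apply: H; left | move=> w wl; apply: H; right].
  by move=> [H1 H2] w [<-|wl] //; apply: H2.
exact: openI (open_eqa v) IH.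
Qed.

Definition phi (k : nat) (x : Tree) : Tree :=
  fun v => if size v == k then a else x v.

Lemma phi_cvg (x : Tree) : (fun k => phi k x) @ \oo --> x.
Proof.
apply/(cvg_sup _ _ (fmap_filter _ _)) => v.
move=> A [B [[C Cop <-] Cx] BA].
exists (size v).+1 => // k /= Hk; apply: BA; rewrite /= /phi.
rewrite /phi ifF //.
by apply/eqP => E; move: Hk; rewrite E ltnn.
Qed.

Definition Nm (m : nat) : set Tree :=
  [set t : Tree | exists d, forall n, (m <= n)%N -> t (branch_vertex d n) <> a].

Lemma Nm_nd m : nowhere_dense (Nm m).
Proof.
rewrite /nowhere_dense; apply/seteqP; split => x //= Hx.
have Hc := phi_cvg Hx.
have H2 : \forall k \near \oo, closure (Nm m) (phi k x) /\ (m <= k)%N.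
  near=> k; split; [near: k; exact: Hc | near: k; exact: nbhs_infty_ge].
have [k [Ck mk]] := filter_ex H2.
have nW : nbhs (phi k x) [set s : Tree | forall v, List.In v (words k) -> s v = a].
  apply: open_nbhs_nbhs; split; first exact: open_W.
  by move=> v /= Hv; rewrite /phi (words_size Hv) eqxx.
have [t [[d Hd] Wt]] := Ck _ nW.
by apply: (Hd k mk); apply: Wt; apply: words_branch.
Unshelve. all: end_near.
Qed.

Theorem proposition5 : comeager L_infty.
Proof.
exists Nm; split; first exact: Nm_nd.
apply/seteqP; split => t /=.
- move=> /existsNP [d] /existsNP [m] H; exists m => //; exists d => n mn ta.
  by apply: H; exists n.
- move=> [m _ [d Hd]] Ht.
  have [n [mn tn]] := Ht d m.
  exact: (Hd n mn tn).
Qed.
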